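(* A non-empty graph $T$ is a $\mathsf{TJ}_n$-graph for infinitely many integers $n$ if and only if there exists an integer $k$ such that $T$ is a maximum $\mathsf{TJ}_k$-graph.
   Context: Graphs are finite, simple, undirected; non-empty means having at least one vertex. $\mathsf{TJ}_k(G)$ is the graph on the cliques of $G$ of size $k$ where $C, C'$ are adjacent iff $|C \setminus C'| = |C' \setminus C| = 1$. $T$ is a $\mathsf{TJ}_k$-graph if $T \cong \mathsf{TJ}_k(G)$ for some graph $G$, and a maximum $\mathsf{TJ}_k$-graph if $T \cong \mathsf{TJ}_k(G)$ for some $G$ with $\omega(G) = k$ ($\omega$ = maximum clique size). *)

(* Defs.v *)
From mathcomp Require Import all_boot.
Set Implicit Arguments. Unset Strict Implicit. Unset Printing Implicit Defensive.

Record sgraph := SGraph {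
  svert : finType;
  sadj : rel svert;
  sadj_sym : symmetric sadj;
  sadj_irr : irreflexive sadj }.

Definition clique (G : sgraph) (C : {set svert G}) : bool :=
  [forall x in C, forall y in C, (x != y) ==> sadj x y].

Definition kclique (G : sgraph) (k : nat) (C : {set svert G}) : bool :=
  clique C && (#|C| == k).

Definition tj_vert (G : sgraph) (k : nat) : finType :=
  {C : {set svert G} | kclique k C}.

Definition tj_adj (G : sgraph) (k : nat) : rel (tj_vert G k) :=
  fun C C' => (#|val C :\: val C'| == 1) && (#|val C' :\: val C| == 1).

Definition gr_iso (V1 V2 : finType) (e1 : rel V1) (e2 : rel V2) : Prop :=
  exists f : V1 -> V2, bijective f /\ forall x y, e2 (f x) (f y) = e1 x y.

Definition clique_number_is (G : sgraph) (k : nat) : Prop :=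
  (exists C : {set svert G}, kclique k C) /\
  (forall C : {set svert G}, clique C -> #|C| <= k).

Definition is_TJ (T : sgraph) (k : nat) : Prop :=
  exists G : sgraph, gr_iso (@sadj T) (@tj_adj G k).

Definition is_max_TJ (T : sgraph) (k : nat) : Prop :=
  exists G : sgraph, clique_number_is G k /\ gr_iso (@sadj T) (@tj_adj G k).

(* Main.v *)
Require Import Defs.
From mathcomp Require Import all_boot.
Set Implicit Arguments. Unset Strict Implicit. Unset Printing Implicit Defensive.

Lemma sub_of_card (V : finType) (A : {set V}) j :
  j <= #|A| -> exists B : {set V}, B \subset A /\ #|B| = j.
Proof.
elim: j => [|j IH] hj; first by exists set0; rewrite sub0set cards0.
have [B [sBA cB]] := IH (ltnW hj).
have : 0 < #|A :\: B| by rewrite cardsD (setIidPr sBA) cB subn_gt0.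
case/card_gt0P => x; rewrite inE => /andP [xB xA].
exists (x |: B); split; first by rewrite subUset sub1set xA sBA.
by rewrite cardsU1 xB cB.
Qed.

Lemma clique_sub (G : sgraph) (A B : {set svert G}) :
  B \subset A -> clique A -> clique B.
Proof.
move=> sBA /forallP cA; apply/forallP => x; apply/implyP => xB.
apply/forallP => y; apply/implyP => yB.
have := cA x; rewrite (subsetP sBA x xB) /= => /forallP /(_ y).
by rewrite (subsetP sBA y yB).
Qed.

Lemma card_tj (G : sgraph) n : #|tj_vert G n| = #|[set C : {set svert G} | kclique n C]|.
Proof. by rewrite card_sig cardsE. Qed.

Lemma big_clique (G : sgraph) n (C : {set svert G}) :
  clique C -> n < #|C| -> n.+1 <= #|tj_vert G n|.
Proof.
move=> cC ltnC.
have [B [sBC cB]] := sub_of_card ltnC.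
have cBB : clique B := clique_sub sBC cC.
rewrite card_tj -cB.
have inj : {in B &, injective (fun x => B :\ x)}.
  move=> x y xB yB /setP /(_ x); rewrite !inE eqxx /= xB andbT.
  by case: eqP => // ->.
rewrite -(card_in_imset inj); apply: subset_leq_card; apply/subsetP => D.
case/imsetP => x xB ->; rewrite inE /kclique.
rewrite (clique_sub _ cBB) ?subD1set //=.
move: cB; rewrite (cardsD1 x B) xB add1n => -[->]; by rewrite eqxx.
Qed.

Section Join.
Variables (G : sgraph) (m : nat).
Notation JV := (svert G + 'I_m)%type.
Definition jadj : rel JV := fun x y =>
  match x, y with inl a, inl b => sadj a b | inr i, inr j => i != j | _, _ => true end.
Lemma jsym : symmetric jadj.
Proof. case=> [a|i] [b|j]; [exact: (sadj_sym a b) | exact: erefl | exact: erefl | exact: (congr1 negb (eq_sym i j))]. Qed.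
Lemma jirr : irreflexive jadj.
Proof. case=> [a|i]; [exact: (sadj_irr a) | exact: (congr1 negb (eqxx i))]. Qed.
Definition GJ := SGraph jsym jirr.

Definition E (C : {set svert G}) : {set JV} := inl @: C :|: inr @: [set: 'I_m].

Lemma inl_notin (a : svert G) (A : {set 'I_m}) : (inl a \in inr @: A) = false.
Proof. apply/negP. move=> /imsetP [i _ H]. done. Qed.
Lemma inr_notin (i : 'I_m) (A : {set svert G}) : (inr i \in inl @: A) = false.
Proof. apply/negP. move=> /imsetP [a _ H]. done. Qed.
Lemma memEl C a : (inl a \in E C) = (a \in C).
Proof.
rewrite /E in_setU mem_imset; last exact: inl_inj.
rewrite inl_notin; exact: orbF.
Qed.
Lemma memEr C i : (inr i \in E C).
Proof. rewrite /E in_setU; apply/orP; right; apply: imset_f; exact: in_setT. Qed.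

Lemma cardE C : #|E C| = #|C| + m.
Proof.
rewrite /E cardsU card_imset; last exact: inl_inj.
rewrite card_imset; last exact: inr_inj.
rewrite cardsT card_ord.
have -> : inl @: C :&: inr @: [set: 'I_m] = set0.
  apply/setP => -[a|i]; rewrite in_setI in_set0 ?inl_notin ?inr_notin; [exact: andbF | exact: andFb].
by rewrite cards0 subn0.
Qed.

Lemma cliqueE C : clique C -> clique (E C : {set svert GJ}).
Proof.
move=> /forallP cC; apply/forallP => x; apply/implyP => xE.
apply/forallP => y; apply/implyP => yE; apply/implyP => nxy.
move: xE yE nxy; case: x => [a|i]; case: y => [b|j]; rewrite ?memEl => aC bC nab; try exact: isT.
  have /implyP/(_ aC)/forallP/(_ b)/implyP/(_ bC)/implyP h := cC a; apply: h.
  by apply: contra nab => /eqP ->.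
change (i != j); apply: contra nab => /eqP ->; exact: eqxx.
Qed.

Definition P (D : {set JV}) : {set svert G} := inl @^-1: D.

Lemma cliqueP (D : {set svert GJ}) : clique D -> clique (P D).
Proof.
move=> /forallP cD; apply/forallP => a; apply/implyP; rewrite inE => aD.
apply/forallP => b; apply/implyP; rewrite inE => bD; apply/implyP => nab.
have /implyP/(_ aD)/forallP/(_ (inl b))/implyP/(_ bD)/implyP h := cD (inl a); apply: h.
by apply: contra nab => /eqP [->].
Qed.

Lemma PE C : P (E C) = C.
Proof. by apply/setP => a; rewrite inE memEl. Qed.

Lemma EP k (D : {set svert GJ}) : (forall C : {set svert G}, clique C -> #|C| <= k) ->
  kclique (k + m) D -> E (P D) = D.
Proof.
move=> om /andP [cD /eqP cardD]; apply/esym/eqP; rewrite eqEcard; apply/andP; split.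
  apply/subsetP => -[a|i] xD; [rewrite memEl inE; exact: xD | exact: memEr].
by rewrite cardE cardD leq_add2r om // cliqueP.
Qed.

Lemma EdiffE C C' : E C :\: E C' = inl @: (C :\: C').
Proof.
apply/setP => -[a|i]; rewrite in_setD ?memEl ?memEr.
  by rewrite mem_imset ?inE //; exact: inl_inj.
by rewrite inr_notin.
Qed.

Lemma card_EdiffE C C' : #|E C :\: E C'| = #|C :\: C'|.
Proof. by rewrite EdiffE card_imset //; exact: inl_inj. Qed.
End Join.

Lemma kcliqueE (G : sgraph) m k (C : {set svert G}) :
  kclique k C -> kclique (G := GJ G m) (k + m) (E m C).
Proof.
move=> /andP [cC /eqP cC']; apply/andP; split; first exact: cliqueE.
by rewrite cardE cC'.
Qed.

Lemma kcliqueP (G : sgraph) m k (D : {set svert (GJ G m)}) :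
  (forall C : {set svert G}, clique C -> #|C| <= k) ->
  kclique (k + m) D -> kclique k (P D).
Proof.
move=> om kD; have eD := EP om kD.
case/andP: kD => cD /eqP cD'; apply/andP; split; first exact: cliqueP.
by move: cD'; rewrite -{1}eD cardE => /eqP; rewrite eqn_add2r.
Qed.

Theorem corollary4p14 (T : sgraph) :
  0 < #|svert T| ->
  ((forall m : nat, exists n : nat, m <= n /\ is_TJ T n) <->
   (exists k : nat, is_max_TJ T k)).
Proof.
move=> T0; split.
- move=> H; have [n [Nn [G [g [gbij gadj]]]]] := H #|svert T|.
  exists n, G; split; last by exists g.
  split.
    case/card_gt0P: T0 => t _; exists (val (g t)); exact: (valP (g t)).
  move=> C cC; rewrite leqNgt; apply/negP => ltC.
  have := big_clique cC ltC; rewrite -(bij_eq_card gbij) ltnNge Nn; exact: id.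
- case=> k [G [[_ om] [g [gbij gadj]]]] m.
  exists (k + m); split; first exact: leq_addl.
  exists (GJ G m).
  pose F (C : tj_vert G k) : tj_vert (GJ G m) (k + m) :=
    exist _ (E m (val C)) (kcliqueE m (valP C)).
  pose Fi (D : tj_vert (GJ G m) (k + m)) : tj_vert G k :=
    exist _ (P (val D)) (kcliqueP om (valP D)).
  exists (F \o g); split.
    apply: bij_comp => //; exists Fi.
      by move=> C; apply: val_inj; rewrite /= PE.
    by move=> D; apply: val_inj; rewrite /= (EP om (valP D)).
  move=> x y; rewrite -gadj /tj_adj /= !card_EdiffE; exact: erefl.
Qed.
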